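(* Let $c\neq 0$ and let $(\phi(r),A(r))$, $r>0$, be a solution of \begin{align*} & (1+r^2) A \phi''+\left(r(1+r^2)A\phi'^2+(1+r^2)A'+\frac{2+4 r^2}{r} A\right)\phi'+2\phi=0, \\ & (1+r^2)A'-\frac{1+3 r^2}{r} (1-A) -2 r \phi^2 + r(1+r^2) A \phi'^2 = 0, \end{align*} regular at $r=0$ with $\phi(r)= c-\tfrac13 c r^2+O(r^4)$ and $A(r)= 1+\tfrac23 c^2 r^2+O(r^4)$, defined on an interval $(0,R)$. Then the function $B(r):=(A(r)-1)(1+r^2)$ has no local maximum in $(0,R)$; more precisely, at any point $r_0\in(0,R)$ with $B'(r_0)=0$ one has $$B''(r_0)=2\phi'(r_0)^2+4r_0^2\phi(r_0)^2\phi'(r_0)^2+4\big(r_0\phi'(r_0)+\phi(r_0)\big)^2\;(>0).$$ Consequently $B$ is increasing on $(0,R)$ and $A(r)\ge 1$ for all $r\in(0,R)$. *)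

(* Defs.v *)
From Stdlib Require Import Reals Lra.
Open Scope R_scope.

Definition bigO4_at_0plus (f g : R -> R) : Prop :=
  exists K delta : R, 0 < delta /\
    forall r, 0 < r < delta -> Rabs (f r - g r) <= K * r ^ 4.

(* The ODE system at radius r, with phi1 = phi', phi2 = phi'', A1 = A'. *)
Definition ode1 (r ph ph1 ph2 a a1 : R) : Prop :=
  (1 + r^2) * a * ph2
  + (r * (1 + r^2) * a * ph1^2 + (1 + r^2) * a1 + (2 + 4 * r^2) / r * a) * ph1
  + 2 * ph = 0.

Definition ode2 (r ph ph1 a a1 : R) : Prop :=
  (1 + r^2) * a1 - (1 + 3 * r^2) / r * (1 - a) - 2 * r * ph^2
  + r * (1 + r^2) * a * ph1^2 = 0.

Definition Bfun (A : R -> R) (r : R) : R := (A r - 1) * (1 + r^2).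

(* Main.v *)
From Stdlib Require Import Reals Lra Classical.
From Coquelicot Require Import Coquelicot.
Require Import Defs.
Open Scope R_scope.

Lemma dcont (f : R -> R) x l : derivable_pt_lim f x l -> continuity_pt f x.
Proof. intro H. apply derivable_continuous_pt. exists l. exact H. Qed.

Lemma cont_elim (f : R -> R) x : continuity_pt f x -> forall eps, 0 < eps ->
  exists d, 0 < d /\ forall y, Rabs (y - x) < d -> Rabs (f y - f x) < eps.
Proof.
  intros Hc eps He. destruct (Hc eps He) as [alp [Ha Hx]].
  exists alp; split; auto. intros y Hy.
  destruct (Req_dec y x) as [->|Hne].
  - rewrite Rminus_diag, Rabs_R0; lra.
  - apply (Hx y). split; [split; [exact I| auto] | exact Hy].
Qed.

Lemma cont_right_eq (f : R -> R) m b v : continuity_pt f m -> m < b ->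
  (forall x, m < x <= b -> f x = v) -> f m = v.
Proof.
  intros Hc Hmb H. destruct (Req_dec (f m) v) as [|Hne]; auto. exfalso.
  assert (He : 0 < Rabs (f m - v)) by (apply Rabs_pos_lt; lra).
  destruct (cont_elim f m Hc _ He) as [d [Hd Hx]].
  set (x := m + Rmin (d/2) (b-m)).
  assert (h1 : 0 < Rmin (d/2) (b-m)) by (apply Rmin_pos; lra).
  assert (h2 : Rmin (d/2) (b-m) <= d/2) by apply Rmin_l.
  assert (h3 : Rmin (d/2) (b-m) <= b - m) by apply Rmin_r.
  specialize (Hx x). rewrite (H x) in Hx by (unfold x; lra).
  assert (Rabs (v - f m) < Rabs (f m - v)).
  { apply Hx. unfold x. rewrite Rabs_right; lra. }
  rewrite Rabs_minus_sym in H0. lra.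
Qed.

Lemma cont_right_le (f : R -> R) m b v : continuity_pt f m -> m < b ->
  (forall x, m < x <= b -> f x <= v) -> f m <= v.
Proof.
  intros Hc Hmb H. destruct (Rle_or_lt (f m) v) as [|Hlt]; auto. exfalso.
  destruct (cont_elim f m Hc (f m - v)) as [d [Hd Hx]]; [lra|].
  set (x := m + Rmin (d/2) (b-m)).
  assert (h1 : 0 < Rmin (d/2) (b-m)) by (apply Rmin_pos; lra).
  assert (h2 : Rmin (d/2) (b-m) <= d/2) by apply Rmin_l.
  assert (h3 : Rmin (d/2) (b-m) <= b - m) by apply Rmin_r.
  assert (Hfx : f x <= v) by (apply H; unfold x; lra).
  assert (Rabs (f x - f m) < f m - v).
  { apply Hx. unfold x. rewrite Rabs_right; lra. }
  rewrite Rabs_minus_sym, Rabs_right in H0; lra.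
Qed.

Lemma down_ind (a b : R) (P : R -> Prop) : a < b -> P b ->
  (forall m, a < m < b -> (forall x, m < x <= b -> P x) -> P m) ->
  (forall m, a < m <= b -> P m -> exists d, 0 < d /\ forall x, m - d < x <= m -> a < x -> P x) ->
  forall x, a < x <= b -> P x.
Proof.
  intros Hab Pb Hcl Hloc x Hx. apply NNPP; intro Hn.
  set (E := fun y => a < y <= b /\ ~ P y).
  assert (Hb : bound E) by (exists b; intros y [Hy _]; lra).
  assert (Hne : exists y, E y) by (exists x; split; auto).
  destruct (completeness E Hb Hne) as [m [Hub Hlub]].
  assert (Hxm : x <= m) by (apply Hub; split; auto).
  assert (Hmb : m <= b) by (apply Hlub; intros y [Hy _]; lra).
  assert (Hr : forall y, m < y <= b -> P y).
  { intros y Hy. apply NNPP; intro Hny. assert (y <= m) by (apply Hub; split; [lra|auto]). lra. }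
  assert (Pm : P m).
  { destruct (Req_dec m b) as [->|Hne2]; auto. apply Hcl; auto. lra. }
  destruct (Hloc m ltac:(lra) Pm) as [d [Hd Hl]].
  assert (m <= m - d).
  { apply Hlub. intros y [Hy Hny].
    assert (y <= m) by (apply Hub; split; auto).
    destruct (Rle_or_lt y (m - d)); auto. exfalso. apply Hny.
    destruct (Rle_or_lt y m).
    - apply Hl; lra.
    - apply Hr; lra. }
  lra.
Qed.

Lemma mvt_loc (f f' : R -> R) a b x y :
  (forall c, a < c < b -> derivable_pt_lim f c (f' c)) -> a < x -> x < y -> y < b ->
  exists c, f y - f x = f' c * (y - x) /\ x < c < y.
Proof. intros. apply MVT_cor2; auto. intros; apply H; lra. Qed.

Lemma deriv_ext_loc (f g : R -> R) a b x l : derivable_pt_lim f x l ->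
  (forall t, a < t < b -> f t = g t) -> a < x < b -> derivable_pt_lim g x l.
Proof.
  intros Hf Heq Hx eps He. destruct (Hf eps He) as [d Hd].
  assert (hp : 0 < Rmin d (Rmin (x - a) (b - x))).
  { apply Rmin_pos; [apply cond_pos| apply Rmin_pos; lra]. }
  exists (mkposreal _ hp). intros h Hh Hlt. simpl in Hlt.
  assert (h1 := Rmin_l d (Rmin (x - a) (b - x))).
  assert (h2 := Rmin_r d (Rmin (x - a) (b - x))).
  assert (h3 := Rmin_l (x - a) (b - x)).
  assert (h4 := Rmin_r (x - a) (b - x)).
  assert (Rabs h < x - a /\ Rabs h < b - x) by lra.
  destruct H as [Ha Hb].
  rewrite <- (Heq x) by lra. rewrite <- (Heq (x + h)).
  - apply Hd; auto. lra.
  - destruct (Rle_or_lt 0 h).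
    + rewrite Rabs_right in Hb by lra. lra.
    + rewrite Rabs_left in Ha by lra. lra.
Qed.

Lemma deriv_pos_right (G : R -> R) m s l : derivable_pt_lim G m l -> 0 < l -> G m = 0 -> m < s ->
  exists x, m < x <= s /\ 0 < G x.
Proof.
  intros Hd Hl Hm Hs. destruct (Hd (l/2) ltac:(lra)) as [d Hdd].
  set (h := Rmin (d/2) (s - m)).
  assert (h1 : 0 < h) by (apply Rmin_pos; [generalize (cond_pos d); lra|lra]).
  assert (h2 : h <= d/2) by apply Rmin_l.
  assert (h3 : h <= s - m) by apply Rmin_r.
  exists (m + h). split; [lra|].
  assert (Hh : Rabs ((G (m + h) - G m) / h - l) < l/2).
  { apply Hdd; [lra|]. rewrite Rabs_right by lra. generalize (cond_pos d); lra. }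
  rewrite Hm, Rminus_0_r in Hh.
  assert (G (m+h) / h > l/2 - l/2 + 0).
  { apply Rabs_def2 in Hh. lra. }
  assert (G (m+h) = G (m+h) / h * h) by (field; lra).
  rewrite H0. apply Rmult_lt_0_compat; lra.
Qed.

Lemma F4 r p p1 p2 a a1 :
  0 < r -> ode1 r p p1 p2 a a1 -> ode2 r p p1 a a1 ->
  a1 * (1+r^2) + 2*r*(a-1) = 0 ->
  let B := (a-1)*(1+r^2) in let Bp := a1 * (1+r^2) + 2*r*(a-1) in
  B/r^2 - Bp/r + 2*p^2 + 4*r*p*p1 - (B+1+r^2)*p1^2 - r*(Bp+2*r)*p1^2
   - 2*r*(B+1+r^2)*p1*p2
  = 2*p1^2 + 4*r^2*p^2*p1^2 + 4*(r*p1+p)^2.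
Proof.
  unfold ode1, ode2; intros hr E1 E2 E3; cbv zeta.
  assert (ha1 : a1 = -2*r*(a-1)/(1+r^2)) by (field_simplify_eq; [lra| nra]).
  subst a1.
  assert (hd : (1+r^2)/r + r*(1+r^2)*p1^2 > 0).
  { assert (0 < (1+r^2)/r) by (apply Rdiv_lt_0_compat; nra).
    assert (0 <= r*(1+r^2)*p1^2) by (apply Rmult_le_pos; [nra| nra]). lra. }
  assert (ha : a = (2*r*p^2 + (1+r^2)/r) / ((1+r^2)/r + r*(1+r^2)*p1^2)).
  { assert (hh : a*((1+r^2)/r + r*(1+r^2)*p1^2) - (2*r*p^2 + (1+r^2)/r) =
      (1 + r ^ 2) * (-2*r*(a-1)/(1+r^2)) - (1 + 3 * r ^ 2) / r * (1 - a) - 2 * r * p ^ 2 +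
      r * (1 + r ^ 2) * a * p1 ^ 2) by (field; repeat split; try lra; nra).
    rewrite E2 in hh.
    assert (hh2 : a*((1+r^2)/r + r*(1+r^2)*p1^2) = (2*r*p^2 + (1+r^2)/r)) by lra.
    rewrite <- hh2. field. split; [lra|]. assert (0 <= r*(1+r^2)*p1^2*r) by (apply Rmult_le_pos; [apply Rmult_le_pos; nra|lra]). nra. }
  transitivity (2*p1^2 + 4*r^2*p^2*p1^2 + 4*(r*p1+p)^2 + (-2*r*p1)*((1 + r ^ 2) * a * p2 +
     (r * (1 + r ^ 2) * a * p1 ^ 2 + (1 + r ^ 2) * (-2*r*(a-1)/(1+r^2)) + (2 + 4 * r ^ 2) / r * a) * p1 +
     2 * p)).
  2: rewrite E1; ring.
  rewrite ha. field. assert (0 <= r*(1+r^2)*p1^2*r) by (apply Rmult_le_pos; [apply Rmult_le_pos; nra|lra]). repeat split; nra.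
Qed.

Ltac fixD :=
  repeat match goal with
  | H : is_derive ?f ?x ?l |- context [Derive (fun y => ?f y) ?x] =>
      replace (Derive (fun y => f y) x) with l by (symmetry; apply is_derive_unique; exact H)
  | H : is_derive ?f ?x ?l |- context [Derive ?f ?x] =>
      replace (Derive f x) with l by (symmetry; apply is_derive_unique; exact H)
  end.

Ltac exD :=
  repeat match goal with
  | |- _ /\ _ => split
  | |- True => exact I
  | H : is_derive ?f ?x ?l |- ex_derive (fun y => ?f y) ?x => exists l; exact H
  | H : is_derive ?f ?x ?l |- ex_derive ?f ?x => exists l; exact H
  end.

Theorem mainTheorem2
  (c Rmax : R) (phi phi1 phi2 A A1 : R -> R)
  (hc : c <> 0) (hR : 0 < Rmax)
  (dphi : forall r, 0 < r < Rmax -> derivable_pt_lim phi r (phi1 r))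
  (dphi1 : forall r, 0 < r < Rmax -> derivable_pt_lim phi1 r (phi2 r))
  (dA : forall r, 0 < r < Rmax -> derivable_pt_lim A r (A1 r))
  (e1 : forall r, 0 < r < Rmax -> ode1 r (phi r) (phi1 r) (phi2 r) (A r) (A1 r))
  (e2 : forall r, 0 < r < Rmax -> ode2 r (phi r) (phi1 r) (A r) (A1 r))
  (asym_phi : bigO4_at_0plus phi (fun r => c - 1/3 * c * r^2))
  (asym_A : bigO4_at_0plus A (fun r => 1 + 2/3 * c^2 * r^2)) :
  (forall (B1 : R -> R) (r0 b2 : R),
      (forall r, 0 < r < Rmax -> derivable_pt_lim (Bfun A) r (B1 r)) ->
      0 < r0 < Rmax ->
      derivable_pt_lim B1 r0 b2 ->
      B1 r0 = 0 ->
      b2 = 2 * (phi1 r0)^2 + 4 * r0^2 * (phi r0)^2 * (phi1 r0)^2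
           + 4 * (r0 * phi1 r0 + phi r0)^2
      /\ 0 < b2)
  /\ (forall r s, 0 < r -> r < s -> s < Rmax -> Bfun A r < Bfun A s)
  /\ (forall r, 0 < r < Rmax -> 1 <= A r).
Proof.
  pose (Bp := fun r => A1 r * (1 + r^2) + 2*r*(A r - 1)).
  pose (G := fun r => -(Bfun A r)/r + 2*r*(phi r)^2 - r*(Bfun A r + 1 + r^2)*(phi1 r)^2).
  pose (G' := fun r => Bfun A r/r^2 - Bp r/r + 2*(phi r)^2 + 4*r*phi r*phi1 r
     - (Bfun A r+1+r^2)*(phi1 r)^2 - r*(Bp r+2*r)*(phi1 r)^2
     - 2*r*(Bfun A r+1+r^2)*phi1 r*phi2 r).
  pose (T := fun r => 2*(phi1 r)^2 + 4*r^2*(phi r)^2*(phi1 r)^2 + 4*(r*phi1 r+phi r)^2).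
  assert (F1 : forall r, 0 < r < Rmax -> Bp r = G r).
  { intros r Hr. specialize (e2 r Hr). unfold ode2 in e2. unfold Bp, G, Bfun.
    assert (H : A1 r * (1 + r ^ 2) + 2 * r * (A r - 1) -
      (- ((A r - 1) * (1 + r ^ 2)) / r + 2 * r * phi r ^ 2 -
       r * ((A r - 1) * (1 + r ^ 2) + 1 + r ^ 2) * phi1 r ^ 2) =
      (1 + r^2) * A1 r - (1 + 3 * r^2) / r * (1 - A r) - 2 * r * (phi r)^2
      + r * (1 + r^2) * A r * (phi1 r)^2) by (field; lra).
    lra. }
  assert (F2 : forall r, 0 < r < Rmax -> derivable_pt_lim (Bfun A) r (Bp r)).
  { intros r Hr. apply is_derive_Reals.
    assert (HA := proj2 (is_derive_Reals _ _ _) (dA r Hr)).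
    apply (is_derive_ext (fun t => (A t - 1)*(1+t^2))); [reflexivity|].
    auto_derive; exD. fixD. unfold Bp. ring. }
  assert (F3 : forall r, 0 < r < Rmax -> derivable_pt_lim G r (G' r)).
  { intros r Hr. apply is_derive_Reals.
    assert (HA := proj2 (is_derive_Reals _ _ _) (dA r Hr)).
    assert (Hp := proj2 (is_derive_Reals _ _ _) (dphi r Hr)).
    assert (Hp1 := proj2 (is_derive_Reals _ _ _) (dphi1 r Hr)).
    apply (is_derive_ext (fun r => -((A r - 1)*(1+r^2))/r + 2*r*(phi r)^2
       - r*((A r - 1)*(1+r^2) + 1 + r^2)*(phi1 r)^2)); [reflexivity|].
    auto_derive; exD; try lra. fixD. unfold G', Bp, Bfun. field. lra. }
  assert (F4' : forall r, 0 < r < Rmax -> Bp r = 0 -> G' r = T r).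
  { intros r Hr H0. unfold G', T. unfold Bp in *. unfold Bfun.
    apply (F4 r (phi r) (phi1 r) (phi2 r) (A r) (A1 r)); auto; try lra. }

  assert (cA : forall r, 0 < r < Rmax -> continuity_pt A r) by (intros; eapply dcont; apply dA; auto).
  assert (cphi : forall r, 0 < r < Rmax -> continuity_pt phi r) by (intros; eapply dcont; apply dphi; auto).
  assert (cphi1 : forall r, 0 < r < Rmax -> continuity_pt phi1 r) by (intros; eapply dcont; apply dphi1; auto).
  assert (cG : forall r, 0 < r < Rmax -> continuity_pt G r) by (intros; eapply dcont; apply F3; auto).
  assert (Loc : forall p, 0 < p < Rmax -> phi p = 0 -> phi1 p = 0 -> A p = 1 ->
     exists d, 0 < d /\ forall x, p - d < x <= p -> 0 < x -> phi x = 0 /\ phi1 x = 0 /\ A x = 1).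
  { intros p Hp P0 P1 PA.
    pose (g1 := fun r => 2*r*(1+r^2)*A r - 4*r).
    pose (g2 := fun r => (1+3*r^2)*(1 - A r) + 2*r^2*(phi r)^2 + (2+4*r^2)*A r).
    assert (HA := proj2 (is_derive_Reals _ _ _) (dA p Hp)).
    assert (Hph := proj2 (is_derive_Reals _ _ _) (dphi p Hp)).
    assert (cg1 : continuity_pt g1 p).
    { apply derivable_continuous_pt, ex_derive_Reals_0. unfold g1. auto_derive. exD. }
    assert (cg2 : continuity_pt g2 p).
    { apply derivable_continuous_pt, ex_derive_Reals_0. unfold g2. auto_derive. exD. }
    destruct (cont_elim A p (cA p Hp) (1/2)) as [d1 [Hd1 HA1]]; [lra|].
    destruct (cont_elim g1 p cg1 1) as [d3 [Hd3 HG1]]; [lra|].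
    destruct (cont_elim g2 p cg2 1) as [d4 [Hd4 HG2]]; [lra|].
    pose (K := Rabs (g1 p) + 2*Rabs (g2 p) + 3).
    assert (HK : 0 < K) by (unfold K; generalize (Rabs_pos (g1 p)) (Rabs_pos (g2 p)); lra).
    pose (L := 4*K/p).
    assert (HL : 0 < L) by (unfold L; apply Rdiv_lt_0_compat; lra).
    pose (d := Rmin (Rmin (p/2) (Rmax - p)) (Rmin d1 (Rmin d3 d4))).
    assert (Hd : 0 < d).
    { unfold d. repeat apply Rmin_pos; lra. }
    assert (Hdb : d <= p/2 /\ d <= Rmax - p /\ d <= d1 /\ d <= d3 /\ d <= d4).
    { unfold d. 
      assert (q1 := Rmin_l (Rmin (p/2) (Rmax - p)) (Rmin d1 (Rmin d3 d4))).
      assert (q2 := Rmin_r (Rmin (p/2) (Rmax - p)) (Rmin d1 (Rmin d3 d4))).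
      assert (q3 := Rmin_l (p/2) (Rmax - p)). assert (q4 := Rmin_r (p/2) (Rmax - p)).
      assert (q5 := Rmin_l d1 (Rmin d3 d4)). assert (q6 := Rmin_r d1 (Rmin d3 d4)).
      assert (q7 := Rmin_l d3 d4). assert (q8 := Rmin_r d3 d4). lra. }
    assert (Hin : forall x, p - d < x < p + d -> 0 < x < Rmax /\ p/2 < x /\
       Rabs (x - p) < d1 /\ Rabs (x - p) < d3 /\ Rabs (x - p) < d4).
    { intros x Hx. assert (Rabs (x - p) < d) by (apply Rabs_def1; lra). lra. }
    pose (u := fun x => phi x ^ 2 + phi1 x ^ 2).
    pose (u' := fun x => 2*phi x*phi1 x + 2*phi1 x*phi2 x).
    assert (Hbound : forall x, p - d < x < p + d -> Rabs (u' x) <= L * u x).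
    { intros x Hx. destruct (Hin x Hx) as [HxI [Hxp [h1 [h3 h4]]]].
      specialize (HA1 x h1). specialize (HG1 x h3). specialize (HG2 x h4).
      rewrite PA in HA1. apply Rabs_def2 in HA1.
      assert (B1 : Rabs (g1 x) <= Rabs (g1 p) + 1).
      { replace (g1 x) with ((g1 x - g1 p) + g1 p) by ring.
        eapply Rle_trans; [apply Rabs_triang|]. lra. }
      assert (B2 : Rabs (g2 x) <= Rabs (g2 p) + 1).
      { replace (g2 x) with ((g2 x - g2 p) + g2 p) by ring.
        eapply Rle_trans; [apply Rabs_triang|]. lra. }
      assert (E1 := e1 x HxI). assert (E2 := e2 x HxI). unfold ode1 in E1. unfold ode2 in E2.
      assert (Id : x * ((1+x^2)*A x) * u' x - (g1 x * (phi x * phi1 x) - 2 * g2 x * (phi1 x)^2)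
         = 2*x*phi1 x * ((1 + x^2) * A x * phi2 x
  + (x * (1 + x^2) * A x * phi1 x^2 + (1 + x^2) * A1 x + (2 + 4 * x^2) / x * A x) * phi1 x
  + 2 * phi x) - 2*x*(phi1 x)^2 * ((1 + x^2) * A1 x - (1 + 3 * x^2) / x * (1 - A x) - 2 * x * phi x^2
  + x * (1 + x^2) * A x * phi1 x^2)) by (unfold u', g1, g2; field; lra).
      rewrite E1, E2 in Id.
      assert (Id2 : x * ((1+x^2)*A x) * u' x = g1 x * (phi x * phi1 x) - 2 * g2 x * (phi1 x)^2) by lra.
      assert (Hpp : Rabs (phi x * phi1 x) <= u x).
      { unfold u. apply Rabs_le. split; nra. }
      assert (Hp1 : (phi1 x)^2 <= u x) by (unfold u; nra).
      assert (Hu0 : 0 <= u x) by (unfold u; nra).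
      assert (Hr : Rabs (g1 x * (phi x * phi1 x) - 2 * g2 x * (phi1 x)^2) <= K * u x).
      { eapply Rle_trans; [apply Rabs_triang|]. rewrite Rabs_Ropp, (Rabs_mult (g1 x)), (Rabs_mult (2 * g2 x)), (Rabs_mult 2).
        rewrite (Rabs_right 2) by lra. rewrite (Rabs_right ((phi1 x)^2)) by nra.
        assert (Rabs (g1 x) * Rabs (phi x * phi1 x) <= (Rabs (g1 p) + 1) * u x).
        { apply Rmult_le_compat; auto using Rabs_pos. }
        assert (2 * Rabs (g2 x) * (phi1 x)^2 <= 2 * (Rabs (g2 p) + 1) * u x).
        { apply Rmult_le_compat; try nra. generalize (Rabs_pos (g2 x)); lra. }
        unfold K. lra. }
      rewrite <- Id2, Rabs_mult in Hr.
      assert (HM : p/4 <= x * ((1+x^2)*A x)).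
      { assert (1/2 <= (1+x^2)*A x) by nra. nra. }
      rewrite (Rabs_right (x * ((1 + x ^ 2) * A x))) in Hr by lra.
      assert (Hq : p/4 * Rabs (u' x) <= K * u x).
      { eapply Rle_trans; [|exact Hr]. apply Rmult_le_compat_r; auto using Rabs_pos. }
      unfold L. apply (Rmult_le_reg_l (p/4)); [lra|].
      replace (p / 4 * (4 * K / p * u x)) with (K * u x) by (field; lra). exact Hq. }
    pose (w := fun x => u x * exp (L * x)).
    pose (w' := fun x => (u' x + L * u x) * exp (L * x)).
    assert (Dw : forall x, p - d < x < p + d -> derivable_pt_lim w x (w' x)).
    { intros x Hx. destruct (Hin x Hx) as [HxI _].
      apply is_derive_Reals.
      assert (Hp0 := proj2 (is_derive_Reals _ _ _) (dphi x HxI)).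
      assert (Hp1 := proj2 (is_derive_Reals _ _ _) (dphi1 x HxI)).
      unfold w, u. auto_derive; exD. fixD. unfold w', u', u. ring. }
    assert (Hw' : forall x, p - d < x < p + d -> 0 <= w' x).
    { intros x Hx. specialize (Hbound x Hx). apply Rabs_le_between in Hbound.
      unfold w'. apply Rmult_le_pos; [lra| apply Rlt_le, exp_pos]. }
    assert (Cl1 : forall s, p - d < s <= p -> phi s = 0 /\ phi1 s = 0).
    { intros s Hs. destruct (Req_dec s p) as [->|Hne]; [auto|].
      destruct (mvt_loc w w' (p - d) (p + d) s p Dw) as [cc [Hc1 Hc2]]; try lra.
      assert (0 <= w' cc) by (apply Hw'; lra).
      assert (w p = 0) by (unfold w, u; rewrite P0, P1; ring).
      assert (Hex := exp_pos (L * s)).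
      assert (0 <= u s) by (unfold u; nra).
      assert (w s <= 0) by nra.
      assert (u s = 0) by (unfold w in *; nra).
      unfold u in *. split; nra. }
    exists d. split; auto. intros s Hs Hs0.
    destruct (Cl1 s Hs) as [Q0 Q1]. split; auto. split; auto.
    destruct (Req_dec s p) as [->|Hne]; [auto|].
    pose (v := fun x => x * Bfun A x).
    pose (v' := fun x => Bfun A x + x * Bp x).
    assert (Dv : forall x, 0 < x < Rmax -> derivable_pt_lim v x (v' x)).
    { intros x Hx. apply is_derive_Reals.
      assert (HB := proj2 (is_derive_Reals _ _ _) (F2 x Hx)).
      unfold v. auto_derive; exD. fixD. unfold v'. ring. }
    destruct (mvt_loc v v' 0 Rmax s p Dv) as [cc [Hc1 Hc2]]; try lra.
    assert (Hcc : 0 < cc < Rmax) by lra.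
    destruct (Cl1 cc ltac:(lra)) as [C0 C1].
    assert (v' cc = 0).
    { unfold v'. rewrite (F1 cc Hcc). unfold G. rewrite C0, C1. field. lra. }
    assert (v p = 0) by (unfold v, Bfun; rewrite PA; ring).
    assert (Hvs : v s = 0) by nra.
    unfold v, Bfun in Hvs.
    assert (Hz : (A s - 1) * (1 + s^2) = 0).
    { apply (Rmult_eq_reg_l s); [|lra]. lra. }
    apply Rmult_integral in Hz. destruct Hz; nra. }

  assert (NZ : forall r0, 0 < r0 < Rmax -> Bp r0 = 0 -> phi r0 = 0 -> phi1 r0 = 0 -> False).
  { intros r0 Hr0 HB P0 P1.
    assert (HG := F1 r0 Hr0). rewrite HB in HG. unfold G in HG. rewrite P0, P1 in HG.
    assert (HB0 : Bfun A r0 = 0).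
    { assert (- Bfun A r0 / r0 = 0) by lra.
      assert (Bfun A r0 = - (- Bfun A r0 / r0) * r0) by (field; lra). rewrite H0, H. ring. }
    assert (PA : A r0 = 1).
    { unfold Bfun in HB0. apply Rmult_integral in HB0. destruct HB0; nra. }
    assert (All : forall x, 0 < x <= r0 -> phi x = 0 /\ phi1 x = 0 /\ A x = 1).
    { apply (down_ind 0 r0 (fun x => phi x = 0 /\ phi1 x = 0 /\ A x = 1)); [lra|auto| |].
      - intros m Hm Hr. assert (HmI : 0 < m < Rmax) by lra.
        split; [|split].
        + apply (cont_right_eq phi m r0); [apply cphi; auto|lra|]. intros; apply Hr; auto.
        + apply (cont_right_eq phi1 m r0); [apply cphi1; auto|lra|]. intros; apply Hr; auto.
        + apply (cont_right_eq A m r0); [apply cA; auto|lra|]. intros; apply Hr; auto.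
      - intros m Hm [Q0 [Q1 Q2]]. apply Loc; auto. lra. }
    destruct asym_phi as [K [dl [Hdl HK]]].
    assert (Hc : 0 < Rabs c) by (apply Rabs_pos_lt; auto).
    assert (HK1 : 0 < Rabs K + 1) by (generalize (Rabs_pos K); lra).
    pose (r := Rmin (Rmin 1 (dl/2)) (Rmin r0 (Rabs c/(2*(Rabs K+1))))).
    assert (Hrb : 0 < r /\ r <= 1 /\ r <= dl/2 /\ r <= r0 /\ r <= Rabs c/(2*(Rabs K+1))).
    { assert (0 < Rabs c/(2*(Rabs K+1))) by (apply Rdiv_lt_0_compat; lra).
      unfold r. 
      assert (q1 := Rmin_l (Rmin 1 (dl/2)) (Rmin r0 (Rabs c/(2*(Rabs K+1))))).
      assert (q2 := Rmin_r (Rmin 1 (dl/2)) (Rmin r0 (Rabs c/(2*(Rabs K+1))))).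
      assert (q3 := Rmin_l 1 (dl/2)). assert (q4 := Rmin_r 1 (dl/2)).
      assert (q5 := Rmin_l r0 (Rabs c/(2*(Rabs K+1)))). assert (q6 := Rmin_r r0 (Rabs c/(2*(Rabs K+1)))).
      repeat split; try lra. repeat apply Rmin_pos; lra. }
    destruct Hrb as [h0 [h1 [h2 [h3 h4]]]].
    specialize (HK r ltac:(lra)). destruct (All r ltac:(lra)) as [Z _]. rewrite Z in HK.
    replace (0 - (c - 1/3*c*r^2)) with (- (c * (1 - r^2/3))) in HK by field.
    rewrite Rabs_Ropp, Rabs_mult, (Rabs_right (1 - r^2/3)) in HK by nra.
    assert (K * r^4 <= Rabs K * r) .
    { assert (r*r <= 1) by nra. assert (r*r*r <= 1) by nra.
      assert (r^4 <= r) by (replace (r^4) with (r*(r*r*r)) by ring; nra).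
      assert (K <= Rabs K) by apply Rle_abs. assert (0 <= r^4) by nra.
      assert (K*r^4 <= Rabs K * r^4) by (apply Rmult_le_compat_r; lra).
      assert (Rabs K * r^4 <= Rabs K * r) by (apply Rmult_le_compat_l; [apply Rabs_pos| lra]). lra. }
    assert ((Rabs K + 1)*r <= Rabs c/2).
    { replace (Rabs c/2) with ((Rabs K + 1) * (Rabs c/(2*(Rabs K+1)))) by (field; lra).
      apply Rmult_le_compat_l; lra. }
    assert (Rabs c * (2/3) <= Rabs c * (1 - r^2/3)) by (apply Rmult_le_compat_l; nra).
    lra. }

  assert (Tpos : forall r, 0 < r < Rmax -> Bp r = 0 -> 0 < T r).
  { intros r Hr HB. unfold T.
    destruct (Req_dec (phi1 r) 0) as [Z1|Z1].
    - destruct (Req_dec (phi r) 0) as [Z0|Z0].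
      + exfalso; apply (NZ r); auto.
      + rewrite Z1. assert (0 < phi r ^2) by (apply pow2_gt_0; auto). nra.
    - assert (0 < phi1 r ^2) by (apply pow2_gt_0; auto).
      assert (0 <= r^2 * phi r^2 * phi1 r^2) by (apply Rmult_le_pos; [apply Rmult_le_pos|]; nra).
      assert (0 <= (r * phi1 r + phi r)^2) by apply pow2_ge_0. lra. }
  destruct asym_A as [KA [dA0 [HdA HKA]]].
  assert (HKA1 : 0 < Rabs KA + 1) by (generalize (Rabs_pos KA); lra).
  assert (Hc2 : 0 < c^2) by (apply pow2_gt_0; auto).
  assert (Bsmall : forall x, 0 < x -> x <= 1 -> x < dA0 -> Bfun A x <= 2*(c^2 + Rabs KA)*x).
  { intros x Hx0 Hx1 Hx2. specialize (HKA x ltac:(lra)). apply Rabs_le_between' in HKA.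
    assert (KA <= Rabs KA) by apply Rle_abs.
    assert (x^2 <= x) by nra. assert (x^4 <= x^2) by nra. assert (0 <= x^4) by nra.
    assert (KA * x^4 <= Rabs KA * x).
    { assert (KA * x^4 <= Rabs KA * x^4) by (apply Rmult_le_compat_r; lra).
      assert (Rabs KA * x^4 <= Rabs KA * x) by (apply Rmult_le_compat_l; [apply Rabs_pos|lra]). lra. }
    assert (c^2*x^2 <= c^2*x) by (apply Rmult_le_compat_l; nra).
    assert (0 <= c^2*x^2) by (apply Rmult_le_pos; lra).
    assert (HA1 : A x - 1 <= (c^2 + Rabs KA) * x) by lra.
    unfold Bfun. destruct (Rle_or_lt (A x - 1) 0).
    + assert ((A x - 1) * (1 + x^2) <= 0) by nra. generalize (Rabs_pos KA); nra.
    + assert (x^2 <= 1) by nra. nra. }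
  assert (Bpos : forall x, 0 < x -> x <= 1 -> x < dA0 -> x < c^2/(3*(Rabs KA+1)) -> 0 < Bfun A x).
  { intros x Hx0 Hx1 Hx2 Hx3. specialize (HKA x ltac:(lra)). apply Rabs_le_between' in HKA.
    assert (KA <= Rabs KA) by apply Rle_abs.
    assert (x^2 <= x) by nra. assert (0 < x^2) by nra.
    assert ((Rabs KA + 1) * x < c^2/3).
    { replace (c^2/3) with ((Rabs KA + 1) * (c^2/(3*(Rabs KA+1)))) by (field; lra).
      apply Rmult_lt_compat_l; lra. }
    assert (Rabs KA * x < c^2/3) by nra.
    assert (KA * x^4 <= Rabs KA * x * x^2).
    { replace (x^4) with (x^2*x^2) by ring. assert (x^2*x^2 <= x*x^2) by nra.
      assert (0 <= x^2*x^2) by nra. nra. }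
    assert (Rabs KA * x * x^2 <= c^2/3 * x^2) by (apply Rmult_le_compat_r; lra).
    assert (0 < A x - 1) by nra.
    unfold Bfun. nra. }
  assert (Near0 : forall s, 0 < s -> exists y, 0 < y < s /\ 0 < Bfun A y).
  { intros s Hs. 
    assert (0 < c^2/(3*(Rabs KA+1))) by (apply Rdiv_lt_0_compat; lra).
    assert (q1 := Rmin_l (Rmin 1 (dA0/2)) (Rmin (c^2/(3*(Rabs KA+1))/2) (s/2))).
    assert (q2 := Rmin_r (Rmin 1 (dA0/2)) (Rmin (c^2/(3*(Rabs KA+1))/2) (s/2))).
    assert (q3 := Rmin_l 1 (dA0/2)). assert (q4 := Rmin_r 1 (dA0/2)).
    assert (q5 := Rmin_l (c^2/(3*(Rabs KA+1))/2) (s/2)). assert (q6 := Rmin_r (c^2/(3*(Rabs KA+1))/2) (s/2)).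
    assert (Hy : 0 < Rmin (Rmin 1 (dA0/2)) (Rmin (c^2/(3*(Rabs KA+1))/2) (s/2))) by (repeat apply Rmin_pos; lra).
    set (y := Rmin (Rmin 1 (dA0/2)) (Rmin (c^2/(3*(Rabs KA+1))/2) (s/2))) in *.
    exists y. split; [split; [auto| lra]|]. apply Bpos; lra. }
  assert (Near0' : forall y, 0 < y -> 0 < Bfun A y -> exists x, 0 < x < y /\ Bfun A x < Bfun A y).
  { intros y Hy HBy. pose (C := 2*(c^2 + Rabs KA)).
    assert (HC : 0 <= C) by (unfold C; generalize (Rabs_pos KA); lra).
    assert (0 < Bfun A y / (C+1)) by (apply Rdiv_lt_0_compat; lra).
    assert (q1 := Rmin_l (Rmin (y/2) 1) (Rmin (dA0/2) (Bfun A y/(C+1)))).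
    assert (q2 := Rmin_r (Rmin (y/2) 1) (Rmin (dA0/2) (Bfun A y/(C+1)))).
    assert (q3 := Rmin_l (y/2) 1). assert (q4 := Rmin_r (y/2) 1).
    assert (q5 := Rmin_l (dA0/2) (Bfun A y/(C+1))). assert (q6 := Rmin_r (dA0/2) (Bfun A y/(C+1))).
    assert (Hx : 0 < Rmin (Rmin (y/2) 1) (Rmin (dA0/2) (Bfun A y/(C+1)))) by (repeat apply Rmin_pos; lra).
    set (x := Rmin (Rmin (y/2) 1) (Rmin (dA0/2) (Bfun A y/(C+1)))) in *. exists x. split; [lra|].
    assert (HB := Bsmall x Hx ltac:(lra) ltac:(lra)). fold C in HB.
    assert (C * x <= C * (Bfun A y / (C+1))) by (apply Rmult_le_compat_l; lra).
    assert (C * (Bfun A y / (C+1)) < Bfun A y).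
    { apply (Rmult_lt_reg_r (C+1)); [lra|]. replace (C * (Bfun A y / (C + 1)) * (C + 1)) with (C * Bfun A y) by (field; lra). nra. }
    lra. }

  assert (BpNN : forall s, 0 < s < Rmax -> 0 <= Bp s).
  { intros s Hs. apply Rnot_lt_le; intro Hneg.
    assert (All : forall x, 0 < x <= s -> Bp x < 0).
    { apply (down_ind 0 s (fun x => Bp x < 0)); [lra|auto| |].
      - intros m Hm Hr. assert (HmI : 0 < m < Rmax) by lra.
        assert (HGm : G m <= 0).
        { apply (cont_right_le G m s 0 (cG m HmI)); [lra|].
          intros x Hx. rewrite <- F1 by lra. specialize (Hr x Hx). lra. }
        rewrite F1 by auto. destruct (Rle_lt_or_eq_dec _ _ HGm) as [Hl|He]; auto.
        exfalso. assert (Hb0 : Bp m = 0) by (rewrite F1; auto).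
        assert (Hd := F3 m HmI). rewrite (F4' m HmI Hb0) in Hd.
        destruct (deriv_pos_right G m s (T m) Hd (Tpos m HmI Hb0) He) as [x [Hx Hgx]]; [lra|].
        specialize (Hr x Hx). rewrite F1 in Hr by lra. lra.
      - intros m Hm Pm. assert (HmI : 0 < m < Rmax) by lra.
        rewrite F1 in Pm by auto.
        destruct (cont_elim G m (cG m HmI) (- G m)) as [d [Hd Hx]]; [lra|].
        exists d. split; auto. intros x Hx1 Hx2.
        assert (Rabs (x - m) < d) by (apply Rabs_def1; lra).
        specialize (Hx x H). apply Rabs_def2 in Hx. rewrite F1 by lra. lra. }
    destruct (Near0 s ltac:(lra)) as [y [Hy HBy]].
    destruct (Near0' y ltac:(lra) HBy) as [x [Hx HBx]].
    destruct (mvt_loc (Bfun A) Bp 0 Rmax x y F2) as [cc [Hk1 Hk2]]; try lra.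
    assert (Bp cc < 0) by (apply All; lra). nra. }
  assert (Mono : forall r s, 0 < r -> r <= s -> s < Rmax -> Bfun A r <= Bfun A s).
  { intros r s Hr Hrs Hs. destruct (Req_dec r s) as [->|Hne]; [lra|].
    destruct (mvt_loc (Bfun A) Bp 0 Rmax r s F2) as [cc [Hk1 Hk2]]; try lra.
    assert (0 <= Bp cc) by (apply BpNN; lra). nra. }
  split; [|split].
  - intros B1 r0 b2 HB1 Hr0 Hb2 HB10.
    assert (Heq : forall r, 0 < r < Rmax -> B1 r = G r).
    { intros r Hr. rewrite <- F1 by auto. eapply uniqueness_limite; [apply HB1|apply F2]; auto. }
    assert (Hb0 : Bp r0 = 0) by (rewrite F1, <- Heq; auto).
    assert (HG : derivable_pt_lim G r0 b2) by (apply (deriv_ext_loc B1 G 0 Rmax); auto).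
    assert (b2 = G' r0) by (eapply uniqueness_limite; [exact HG| apply F3; auto]).
    rewrite (F4' r0 Hr0 Hb0) in H. split; [exact H|]. rewrite H. apply Tpos; auto.
  - intros r s Hr Hrs Hs. destruct (Rlt_or_le (Bfun A r) (Bfun A s)) as [|Hle]; auto.
    exfalso.
    assert (Hc : forall t, r < t < s -> Bfun A t = Bfun A r).
    { intros t Ht. assert (Bfun A r <= Bfun A t) by (apply Mono; lra).
      assert (Bfun A t <= Bfun A s) by (apply Mono; lra). lra. }
    assert (Hz : forall t, r < t < s -> Bp t = 0).
    { intros t Ht. assert (Hd : derivable_pt_lim (fun _ => Bfun A r) t (Bp t)).
      { apply (deriv_ext_loc (Bfun A) _ r s); auto. apply F2; lra. }
      eapply uniqueness_limite; [exact Hd| apply derivable_pt_lim_const]. }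
    pose (m := (r + s)/2). assert (HmI : 0 < m < Rmax) by (unfold m; lra).
    assert (Hb0 : Bp m = 0) by (apply Hz; unfold m; lra).
    assert (Hd := F3 m HmI). rewrite (F4' m HmI Hb0) in Hd.
    rewrite F1 in Hb0 by auto.
    destruct (deriv_pos_right G m ((m + s)/2) (T m) Hd (Tpos m HmI ltac:(rewrite F1; auto)) Hb0)
      as [x [Hx Hgx]]; [unfold m; lra|].
    rewrite <- F1 in Hgx by (unfold m in *; lra).
    rewrite Hz in Hgx by (unfold m in *; lra). lra.
  - intros r Hr. destruct (Near0 r ltac:(lra)) as [y [Hy HBy]].
    assert (Bfun A y <= Bfun A r) by (apply Mono; lra).
    unfold Bfun in *. assert (0 < (A r - 1) * (1 + r^2)) by lra. nra.
Qed.
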